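(* For any $\mathbf{z},\mathbf{z}'\in\mathbb{F}_{2^n}^m$ and for $\mathcal{P}=(p_1,\dots,p_m)$ with $p_i\sim\mathcal{P}_i$ independently, where each $\mathcal{P}_i$ is a shift-invariant distribution on $\mathbb{F}_2[X_{i,1},\dots,X_{i,n}]$, $$\mathbb{E}_{\mathcal{P}}\big[|(B*W^{\mathcal{P}})(\mathbf{z})|^2\big]=\mathbb{E}_{\mathcal{P}}\big[|(B*W^{\mathcal{P}})(\mathbf{z}')|^2\big].$$
   Context: Elements of $\mathbb{F}_{2^n}$ are identified with $\mathbb{F}_2^n$ via a fixed basis. For $f:\mathbb{F}_{2^n}^m\to\mathbb{C}$, $\hat f(\mathbf{z})=2^{-nm/2}\sum_{\mathbf{x}}f(\mathbf{x})(-1)^{\mathrm{Tr}(\mathbf{x}\cdot\mathbf{z})}$ (absolute trace). Convolution: $(f*g)(\mathbf{x})=\sum_{\mathbf{y}}f(\mathbf{y})g(\mathbf{x}-\mathbf{y})$. With $\mathcal{R}_i$ the roots of $p_i$ in $\mathbb{F}_2^n$, $\mathcal{R}=\prod_i\mathcal{R}_i$, $W^{\mathcal{P}}(\mathbf{e})=|\mathcal{R}|^{-1/2}$ if $\mathbf{e}\in\mathcal{R}$ and $0$ otherwise. $B:\mathbb{F}_{2^n}^m\to\mathbb{C}$ is the function whose transform $\hat B$ is the indicator of the set $\mathcal{B}=\{\mathbf{e}:\exists\mathbf{x}\in C^\perp,\ \mathsf{Decode}(\mathbf{x}+\mathbf{e})\neq\mathbf{x}\}$, where $C^\perp$ is a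 Reed–Solomon code over $\mathbb{F}_{2^n}$ of length $m$ and $\mathsf{Decode}$ is a fixed decoding map $\mathbb{F}_{2^n}^m\to C^\perp$. A distribution $\mathcal{P}_i$ is shift-invariant if for every $\mathbf{s}\in\mathbb{F}_2^n$, $p(\mathbf{X}+\mathbf{s})$ with $p\sim\mathcal{P}_i$ is distributed as $\mathcal{P}_i$. *)

(* Defs.v *)
From HB Require Import structures.
From mathcomp Require Import all_boot all_order all_algebra all_field.
From mathcomp Require Import all_classical all_reals all_analysis.
From mathcomp Require complex.
From mathcomp Require mpoly.
Import complex.
Import (canonicals) mpoly.
Set Implicit Arguments. Unset Strict Implicit. Unset Printing Implicit Defensive.
Import Order.TTheory GRing.Theory Num.Theory.
Local Open Scope ring_scope.

Section Defs.
Variable R : realType.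
Local Notation C := (complex R).
Variables (F : finFieldType) (n m : nat).

Local Notation vec := {ffun 'I_m -> F}.
Local Notation F2n := {ffun 'I_n -> 'F_2}.
Local Notation poly2 := (mpoly.mpoly n 'F_2).

(* absolute trace F_{2^n} -> F_2 (as an element of F) *)
Definition absTr (x : F) : F := \sum_(i < n) x ^+ (2 ^ i).
Definition dotv (x z : vec) : F := \sum_(i < m) x i * z i.
Definition chi (x : F) : C := if absTr x == 0 then 1 else -1.

Definition fourier (f : vec -> C) (z : vec) : C :=
  (sqrtC ((2 ^ (n * m))%:R))^-1 * \sum_(x : vec) f x * chi (dotv x z).

Definition convol (f g : vec -> C) (x : vec) : C := \sum_(y : vec) f y * g (x - y).

Definition inRS (k : nat) (alpha : 'I_m -> F) (x : vec) : Prop :=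
  exists p : {poly F}, (size p <= k)%N /\ forall i, x i = p.[alpha i].

(* indicator of the set  {e : exists x in C^perp, Decode (x+e) <> x} *)
Definition indB (k : nat) (alpha : 'I_m -> F) (Decode : vec -> vec) (e : vec) : C :=
  if `[< exists x, inRS k alpha x /\ Decode (x + e) <> x >] then 1 else 0.

Variable phi : F -> F2n. (* coordinates w.r.t. the fixed basis *)

(* the set R = prod_i R_i, R_i the roots of p_i, read in F_{2^n}^m via phi *)
Definition rootSet (P : {ffun 'I_m -> poly2}) : {set vec} :=
  [set e : vec | [forall i, mpoly.meval (phi (e i)) (P i) == 0]].

Definition WP (P : {ffun 'I_m -> poly2}) (e : vec) : C :=
  if e \in rootSet P then (sqrtC (#|rootSet P|%:R))^-1 else 0.

Definition shiftp (s : F2n) (p : poly2) : poly2 :=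
  mpoly.comp_mpoly [tuple (@mpoly.mpolyX n 'F_2 (@mpoly.mnm1 n j) + @mpoly.mpolyC n _ (s j) : poly2) | j < n] p.

(* a probability distribution on F_2[X_1..X_n] (discrete: the space is countable) *)
Definition is_distr (mu : poly2 -> R) : Prop :=
  (forall p, 0 <= mu p) /\ (\esum_(p in [set: poly2]) (mu p)%:E = 1)%E.

Definition shift_invariant (mu : poly2 -> R) : Prop :=
  forall (s : F2n) (q : poly2),
    (\esum_(p in [set p | shiftp s p = q]) (mu p)%:E = (mu q)%:E)%E.

(* expectation over P = (p_1,...,p_m), p_i ~ mu i independently *)
Definition expect (mu : 'I_m -> poly2 -> R) (g : {ffun 'I_m -> poly2} -> R) : \bar R :=
  (\esum_(P in [set: {ffun 'I_m -> poly2}]) ((\prod_(i < m) mu i (P i)) * g P)%:E)%E.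

Definition sqnorm (c : C) : R := complex.Re c ^+ 2 + complex.Im c ^+ 2.

End Defs.

(* Main.v *)
Require Import Defs.
From HB Require Import structures.
From mathcomp Require Import all_boot all_order all_algebra all_field.
From mathcomp Require Import all_classical all_reals all_analysis.
From mathcomp Require complex.
From mathcomp Require mpoly.
Import complex.
Import (canonicals) mpoly.
Import Order.TTheory GRing.Theory Num.Theory.
Local Open Scope ring_scope.

Lemma F2_addxx (x : 'F_2) : x + x = 0.
Proof.
have h2 : (2%:R : 'F_2) = 0.
  have /andP[_ /eqP] := pchar_Fp (p:=2) isT. done.
by rewrite -mulr2n -mulr_natr h2 mulr0.
Qed.
Lemma comp_comp (n k l : nat) (R : comNzRingType) (p : mpoly.mpoly n R)
  (lq : n.-tuple (mpoly.mpoly k R)) (lr : k.-tuple (mpoly.mpoly l R)) :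
  mpoly.comp_mpoly lr (mpoly.comp_mpoly lq p) =
  mpoly.comp_mpoly [tuple mpoly.comp_mpoly lr (tnth lq i) | i < n] p.
Proof.
rewrite (mpoly.comp_mpolyE p lq) (mpoly.comp_mpolyE p) raddf_sum /=.
apply/eq_bigr => m _. 
rewrite mpoly.comp_mpolyZ.
rewrite rmorph_prod.
congr (_ *: _).
apply/eq_bigr => i _.
by rewrite rmorphXn /= tnth_map tnth_ord_tuple.

Qed.

Lemma shiftp_invol n s p : shiftp s (shiftp (n:=n) s p) = p.
Proof.
rewrite /shiftp comp_comp.
set t := [tuple _ | i < n].
have -> : t = [tuple mpoly.mpolyX 'F_2 (mpoly.mnm1 i) | i < n].
  apply: eq_from_tnth => i; rewrite /t !tnth_map !tnth_ord_tuple.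
  rewrite mpoly.comp_mpolyD mpoly.comp_mpolyC.
  rewrite mpoly.comp_mpolyXU.
  rewrite -tnth_nth tnth_map tnth_ord_tuple -addrA -raddfD /= F2_addxx.
  by rewrite raddf0 addr0.
exact: mpoly.comp_mpoly_id.
Qed.

Lemma meval_shiftp n (v s : {ffun 'I_n -> 'F_2}) p :
  mpoly.meval v (shiftp s p) = mpoly.meval (v + s) p.
Proof.
rewrite /shiftp mpoly.comp_mpoly_meval; apply: mpoly.meval_eq => i.
by rewrite tnth_map tnth_ord_tuple mpoly.mevalD mpoly.mevalXU mpoly.mevalC ffunE.
Qed.

Lemma mu_shift_eq (R : realType) n (mu : mpoly.mpoly n 'F_2 -> R) s p :
  is_distr mu -> shift_invariant mu -> mu (shiftp s p) = mu p.
Proof.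
move=> [mu0 _] /(_ s (shiftp s p)).
have -> : [set p' | shiftp s p' = shiftp s p]%classic = [set p]%classic.
  Time apply/seteqP; split => q /=.
  2: by move=> ->.
  Time by move=> h; rewrite -(shiftp_invol _ s q) h shiftp_invol.
rewrite esum_set1 ?lee_fin //.
by move=> -[->].
Qed.

Lemma expect_shift (R : realType) n m (mu : 'I_m -> mpoly.mpoly n 'F_2 -> R)
  (mu_distr : forall i, is_distr (mu i)) (mu_shift : forall i, shift_invariant (mu i))
  (s : 'I_m -> {ffun 'I_n -> 'F_2}) (h : {ffun 'I_m -> mpoly.mpoly n 'F_2} -> R) :
  expect mu (fun P => h [ffun i => shiftp (s i) (P i)]) = expect mu h.
Proof.
pose S (P : {ffun 'I_m -> mpoly.mpoly n 'F_2}) := [ffun i => shiftp (s i) (P i)].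
have SK : cancel S S by move=> P; apply/ffunP => i; rewrite !ffunE shiftp_invol.
rewrite /expect [RHS](@reindex_esum _ _ _ setT setT S).
  apply: eq_esum => P _; congr ((_ * _)%:E).
  by apply: eq_bigr => i _; rewrite ffunE mu_shift_eq.
split.
- by [].
- by move=> x y _ _ /(can_inj SK).
- by move=> y _; exists (S y) => //.
Qed.

Theorem mainTheorem4 (R : realType) (F : finFieldType) (n m : nat)
  (charF : 2%N \in [pchar F]) (cardF : #|F| = (2 ^ n)%N)
  (phi : F -> {ffun 'I_n -> 'F_2})
  (phi_add : {morph phi : x y / x + y}) (phi_bij : bijective phi)
  (k : nat) (alpha : 'I_m -> F) (alpha_inj : injective alpha)
  (Decode : {ffun 'I_m -> F} -> {ffun 'I_m -> F})
  (Decode_code : forall y, inRS k alpha (Decode y))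
  (B : {ffun 'I_m -> F} -> complex R)
  (hB : forall e, fourier n B e = indB R k alpha Decode e)
  (mu : 'I_m -> mpoly.mpoly n 'F_2 -> R)
  (mu_distr : forall i, is_distr (mu i))
  (mu_shift : forall i, shift_invariant (mu i))
  (z z' : {ffun 'I_m -> F}) :
  expect mu (fun P => sqnorm (convol B (WP R phi P) z)) =
  expect mu (fun P => sqnorm (convol B (WP R phi P) z')).
Proof.
set t := z' - z.
have key : forall P : {ffun 'I_m -> mpoly.mpoly n 'F_2}, convol B (WP R phi [ffun i => shiftp (phi (t i)) (P i)]) z =
                     convol B (WP R phi P) z'.
  move=> P.
  have rS : rootSet phi [ffun i => shiftp (phi (t i)) (P i)] =
            (fun e : {ffun 'I_m -> F} => e + t) @^-1: rootSet phi P.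
    apply/setP => e; rewrite !inE; apply: eq_forallb => i.
    by rewrite ffunE meval_shiftp -phi_add !ffunE.
  have cS : #|rootSet phi [ffun i => shiftp (phi (t i)) (P i)]| = #|rootSet phi P|.
    by rewrite rS card_preimset //; apply: addIr.
  rewrite /convol; apply: eq_bigr => y _; congr (_ * _).
  rewrite /WP cS rS inE.
  have -> : z - y + t = z' - y by rewrite /t addrC addrA subrK.
  by [].
rewrite -(@expect_shift R n m mu mu_distr mu_shift (fun i => phi (t i))
           (fun P => sqnorm (convol B (WP R phi P) z))).
by apply: congr1; apply: funext => P; rewrite key.
Qed.
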